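(* Let $\mathcal X$ be a compact set in a normed space (dual norm $\|\cdot\|_*$), let $w_n>0$, and let each $l_n$ be differentiable and $\mu_n$-strongly convex for some $\mu_n\ge0$, with $\sum_{m=1}^nw_m\mu_m>0$ for all $n$. In round $n$ let $v_{n+1}$ be a differentiable (possibly nonconvex) function such that $\sum_{m=1}^nw_ml_m+w_{n+1}v_{n+1}$ is convex, and suppose the learner plays $x_{n+1}\in\operatorname{arg\,min}_{x\in\mathcal X}\big(\sum_{m=1}^nw_ml_m+w_{n+1}v_{n+1}\big)(x)$ (with $x_1\in\operatorname{arg\,min}_{\mathcal X}v_1$, $v_1$ convex). Then $$\mathrm{regret}^w(\mathcal X):=\sum_{n=1}^Nw_nl_n(x_n)-\min_{x\in\mathcal X}\sum_{n=1}^Nw_nl_n(x)\le\sum_{n=1}^N\frac{w_n^2\|\nabla l_n(x_n)-\nabla v_n(x_n)\|_*^2}{2\sum_{m=1}^nw_m\mu_m}.$$ In particular, if $\mu_n=\mu>0$ and $w_n=n^p$ with $p\ge0$, then $\mathrm{regret}^w(\mathcal X)\le\frac{p+1}{2\mu}\sum_{n=1}^Nn^{p-1}\|\nabla l_n(x_n)-\nabla v_n(x_n)\|_*^2$. *)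

(* Defs.v *)
From HB Require Import structures.
From mathcomp Require Import all_boot all_order all_algebra.
From mathcomp Require Import all_classical all_reals all_analysis.
Set Implicit Arguments. Unset Strict Implicit. Unset Printing Implicit Defensive.
Import Order.TTheory GRing.Theory Num.Theory.
Import numFieldNormedType.Exports.
Local Open Scope classical_set_scope.
Local Open Scope ring_scope.

Definition convex_in (R : realType) (V : normedModType R) (X : set V) :=
  forall x y t, X x -> X y -> 0 <= t <= 1 -> X (t *: x + (1 - t) *: y).

Definition strongly_convex_on (R : realType) (V : normedModType R)
  (X : set V) (mu : R) (f : V -> R) :=
  forall x y t, X x -> X y -> 0 <= t <= 1 ->
    f (t *: x + (1 - t) *: y) <=
      t * f x + (1 - t) * f y - mu / 2 * t * (1 - t) * `|x - y| ^+ 2.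

Definition convex_on (R : realType) (V : normedModType R)
  (X : set V) (f : V -> R) := strongly_convex_on X 0 f.

Definition dual_norm (R : realType) (V : normedModType R) (L : V -> R) : R :=
  sup [set `|L h| | h in [set h : V | `|h| <= 1]].

Definition is_argmin (R : realType) (V : normedModType R)
  (X : set V) (f : V -> R) (x : V) :=
  X x /\ forall y, X y -> f x <= f y.

Definition wregret (R : realType) (V : normedModType R) (X : set V)
  (w : nat -> R) (l : nat -> V -> R) (x : nat -> V) (N : nat) : R :=
  \sum_(1 <= n < N.+1) w n * l n (x n)
  - inf [set \sum_(1 <= n < N.+1) w n * l n y | y in X].

(* Main.v *)
Require Import Defs.
From HB Require Import structures.
From mathcomp Require Import all_boot all_order all_algebra.
From mathcomp Require Import all_classical all_reals all_analysis.
From mathcomp Require Import ring lra.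
Import Order.TTheory GRing.Theory Num.Theory.
Import numFieldNormedType.Exports.
Local Open Scope classical_set_scope.
Local Open Scope ring_scope.

Section S.
Variables (R : realType) (V : normedModType R).

Lemma dq_right (f : V -> R) (x h : V) : differentiable f x ->
  (fun t : R => t^-1 * (f (t *: h + x) - f x)) @ 0^'+ --> 'd f x h.
Proof.
move=> df; rewrite -deriveE //.
have H : derivable f x h by exact: diff_derivable.
rewrite /derivable in H.
have -> : 'D_h f x = lim ((fun t : R => t^-1 *: ((f \o shift x) (t *: h) - f x)) @ 0^') by [].
move=> A /H /nbhs_ballP [_ /posnumP[e] xe_A].
by exists e%:num => //= y xe_y; rewrite lt_def => /andP [xney _]; apply: xe_A.
Qed.

Lemma step (X : set V) (F G a b : V -> R) (c S D : R) (x z : V) :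
  convex_in X -> X x -> X z -> 0 < S -> 0 < c ->
  (forall y, X y -> G x <= G y) ->
  (forall y, F y = G y + c * (a y - b y)) ->
  strongly_convex_on X S F ->
  differentiable a x -> differentiable b x ->
  (forall h, `|'d a x h - 'd b x h| <= D * `|h|) ->
  F x - F z <= c ^+ 2 * D ^+ 2 / (2 * S).
Proof.
move=> cX Xx Xz S0 c0 Gmin FE scF da db Dh.
set h := z - x.
set K := F z - F x.
set L := 'd a x h - 'd b x h.
set u := `|h|.
have key : c * L <= K - S / 2 * u ^+ 2.
  set q := fun t : R => t^-1 * (a (t *: h + x) - a x) - t^-1 * (b (t *: h + x) - b x).
  have cq : (fun t => c * q t) @ 0^'+ --> c * L.
    by apply: cvgMr; apply: cvgB; exact: dq_right.
  have cg : (fun t : R => K - S / 2 * u ^+ 2 + t * (S / 2 * u ^+ 2)) @ 0^'+ -->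
      K - S / 2 * u ^+ 2.
    rewrite -[X in _ --> X]addr0; apply: cvgD; first exact: cvg_cst.
    rewrite -[X in _ --> X](mul0r (S / 2 * u ^+ 2)).
    have H0 : (fun t : R => t) @ 0^'+ --> (0:R).
      by apply: cvg_at_right_filter; exact: cvg_id.
    exact: (cvgMl H0).
  apply: (ler_cvg_to cq cg).
  near=> t.
  have t0 : 0 < t by near: t; exact: nbhs_right_gt.
  have t1 : t <= 1 by near: t; exact: nbhs_right_le.
  set yt := t *: h + x.
  have E : t *: z + (1 - t) *: x = yt.
    by rewrite /yt /h scalerBr scalerBl scale1r addrCA addrC.
  have Xy : X yt by rewrite -E; apply: cX => //; rewrite (ltW t0) t1.
  have sc := scF z x t Xz Xx; rewrite E in sc.
  have {}sc := sc (introT andP (conj (ltW t0) t1)).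
  have gm := Gmin yt Xy.
  have Fy := FE yt; have Fx := FE x.
  rewrite /q.
  have -> : c * (t^-1 * (a yt - a x) - t^-1 * (b yt - b x)) =
      (c * ((a yt - b yt) - (a x - b x))) / t.
    by field; rewrite gt_eqF.
  rewrite ler_pdivrMr //.
  rewrite /K /u -/h in sc *.
  nra.
have h1 : - L <= D * u by rewrite (le_trans _ (Dh h)) // -normrN ler_norm.
rewrite ler_pdivlMr; last by rewrite mulr_gt0.
have hh : 0 <= (c * D - S * u) ^+ 2 by exact: sqr_ge0.
rewrite /K in key.
have h2 : - (c * L) <= c * (D * u) by rewrite -mulrN ler_wpM2l // ltW.
have h3 : F x - F z <= c * D * u - S / 2 * u ^+ 2 by lra.
have h4 : (F x - F z) * (2 * S) <= (c * D * u - S / 2 * u ^+ 2) * (2 * S).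
  by rewrite ler_wpM2r // mulr_ge0 // ltW.
apply: (le_trans h4).
have -> : (c * D * u - S / 2 * u ^+ 2) * (2 * S) = c ^+ 2 * D ^+ 2 - (c * D - S * u) ^+ 2.
  by field.
by rewrite lerBlDr lerDl.
Unshelve. all: by end_near.
Qed.

Lemma lin_bound (f : V -> R) x : differentiable f x ->
  exists2 r, 0 < r & forall y, `|'d f x y| <= r * `|y|.
Proof.
move=> df.
have c0 : {for 0, continuous ('d f x)} by apply: diff_continuous.
have := @continuous_linear_bounded R V R 0 ('d f x) c0.
move/linear_boundedP/pinfty_ex_gt0 => [r r0 H]; by exists r.
Qed.

Lemma dual_bound (f g : V -> R) x : differentiable f x -> differentiable g x ->
  forall h, `|'d f x h - 'd g x h| <=
    dual_norm (fun h => 'd f x h - 'd g x h) * `|h|.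
Proof.
move=> df dg.
have [r1 r10 B1] := lin_bound _ _ df.
have [r2 r20 B2] := lin_bound _ _ dg.
set L := fun h => 'd f x h - 'd g x h.
set E := [set `|L y| | y in [set y : V | `|y| <= 1]].
have ubE : has_ubound E.
  exists (r1 + r2) => e [y /= y1 <-].
  rewrite /L (le_trans (ler_normB _ _)) // lerD //.
    by rewrite (le_trans (B1 y)) // ler_piMr // ltW.
  by rewrite (le_trans (B2 y)) // ler_piMr // ltW.
move=> h.
have [->|h0] := eqVneq h 0.
  by rewrite normr0 mulr0 !linear0 addr0 normr0.
have Ey : E `|L (`|h|^-1 *: h)|.
  by exists (`|h|^-1 *: h) => //=; rewrite normfZV.
have := ub_le_sup ubE Ey.
rewrite /L !linearZ /= -scalerDr normrZ normfV normr_id.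
rewrite mulrC -ler_pdivrMr ?normr_gt0 //.
Qed.

Lemma scx_sum (X : set V) (w mu : nat -> R) (l : nat -> V -> R) (n : nat) :
  (forall m, (1 <= m <= n)%N -> 0 < w m) ->
  (forall m, (1 <= m <= n)%N -> strongly_convex_on X (mu m) (l m)) ->
  strongly_convex_on X (\sum_(1 <= m < n.+1) w m * mu m)
    (fun y => \sum_(1 <= m < n.+1) w m * l m y).
Proof.
move=> w0 sc x y t Xx Xy t01 /=.
apply: (@le_trans _ _ (\sum_(1 <= m < n.+1) w m * (t * l m x + (1 - t) * l m y
   - mu m / 2 * t * (1 - t) * `|x - y| ^+ 2))).
  apply: ler_sum_nat => m /andP[m1 mn].
  have hm : (1 <= m <= n)%N by rewrite m1 -ltnS.
  by rewrite ler_wpM2l ?(ltW (w0 m hm)) // sc.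
rewrite le_eqVlt; apply/orP; left; apply/eqP.
rewrite !mulr_sumr !mulr_suml -!big_split -sumrB /=.
by apply: eq_bigr => i _; ring.
Qed.
End S.

Section P.
Variable R : realType.

Lemma pow_step (p : R) (n : nat) : 0 <= p ->
  n.+1%:R `^ (p + 1) - n%:R `^ (p + 1) <= (p + 1) * n.+1%:R `^ p.
Proof.
move=> p0; have q0 : 0 < p + 1 by lra.
case: n => [|n].
  rewrite powR0 ?gt_eqF // subr0 (_ : (0.+1)%:R = 1 :> R) // !powR1; lra.
set a : R := n.+1%:R; set b : R := n.+2%:R.
have a0 : 0 < a by rewrite /a ltr0n.
have ba : b = a + 1 by rewrite /a /b -addn1 natrD.
have ab : a < b by lra.
have hd : forall x, x \in `]a, b[ -> is_derive x 1 (fun x => x `^ (p + 1)) ((p + 1) * x `^ (p + 1 - 1)).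
  move=> x; rewrite in_itv /= => /andP[ax _].
  apply: is_derive1_powR; lra.
have hc : {within `[a, b], continuous (fun x : R => x `^ (p + 1))}.
  apply: continuous_in_subspaceT => x; rewrite inE /= in_itv /= => /andP[ax _].
  apply: differentiable_continuous; apply/derivable1_diffP.
  by apply: derivable_powR; rewrite in_itv /= andbT; lra.
have [c cin ->] := MVT ab hd hc.
rewrite addrK ba addrAC subrr add0r mulr1.
move: cin; rewrite in_itv /= => /andP[ac cb].
rewrite ler_pM2l //.
apply: (ge0_ler_powR p0); rewrite ?nnegrE; lra.
Qed.

Lemma sum_pow_lb (p : R) (n : nat) : 0 <= p ->
  n%:R `^ (p + 1) <= (p + 1) * \sum_(1 <= m < n.+1) m%:R `^ p.
Proof.
move=> p0; have q0 : 0 < p + 1 by lra.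
elim: n => [|n IH].
  by rewrite big_geq // mulr0 powR0 ?gt_eqF.
rewrite big_nat_recr //= mulrDr.
have := @pow_step p n p0; lra.
Qed.
End P.

Theorem lemma17 (R : realType) (V : normedModType R) (X : set V)
  (N : nat) (w mu : nat -> R) (l v : nat -> V -> R) (x : nat -> V) :
  compact X -> convex_in X ->
  (forall n, (1 <= n <= N)%N -> 0 < w n) ->
  (forall n, (1 <= n <= N)%N -> 0 <= mu n) ->
  (forall n, (1 <= n <= N)%N -> forall y : V, differentiable (l n) y) ->
  (forall n, (1 <= n <= N)%N -> strongly_convex_on X (mu n) (l n)) ->
  (forall n, (1 <= n <= N)%N -> 0 < \sum_(1 <= m < n.+1) w m * mu m) ->
  (forall n, (1 <= n <= N)%N -> forall y : V, differentiable (v n) y) ->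
  convex_on X (v 1%N) ->
  is_argmin X (v 1%N) (x 1%N) ->
  (forall n, (1 <= n < N)%N ->
     convex_on X (fun y => \sum_(1 <= m < n.+1) w m * l m y + w n.+1 * v n.+1 y)
     /\ is_argmin X
          (fun y => \sum_(1 <= m < n.+1) w m * l m y + w n.+1 * v n.+1 y)
          (x n.+1)) ->
  wregret X w l x N <=
    \sum_(1 <= n < N.+1)
       (w n ^+ 2 * dual_norm (fun h => 'd (l n) (x n) h - 'd (v n) (x n) h) ^+ 2)
       / (2 * \sum_(1 <= m < n.+1) w m * mu m)
  /\
  (forall (mu0 p : R), 0 < mu0 -> 0 <= p ->
     (forall n, (1 <= n <= N)%N -> mu n = mu0) ->
     (forall n, (1 <= n <= N)%N -> w n = n%:R `^ p) ->
     wregret X w l x N <=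
       (p + 1) / (2 * mu0) *
       \sum_(1 <= n < N.+1)
          (n%:R `^ (p - 1) *
           dual_norm (fun h => 'd (l n) (x n) h - 'd (v n) (x n) h) ^+ 2)).
Proof.
move=> cpt cX w0 mu0 dl scl S0 dv cv1 am1 amn.
pose F := fun k y => \sum_(1 <= m < k.+1) w m * l m y.
pose G := fun n y => \sum_(1 <= m < n) w m * l m y + w n * v n y.
have Xx : forall n, (1 <= n <= N)%N ->
    X (x n) /\ forall y, X y -> G n (x n) <= G n y.
  move=> n /andP[]; case: n => [//|k] _ kN; case: k kN => [|k] kN.
    split; first by case: am1.
    move=> y Xy; rewrite /G /= !big_geq // !add0r.
    by rewrite ler_pM2l ?w0 //; case: am1 => _; apply.
  have [_ [Xk Hk]] := amn k.+1 kN.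
  by split.
have step_n : forall n, (1 <= n <= N)%N -> forall z, X z ->
    F n (x n) - F n z <=
    (w n ^+ 2 * dual_norm (fun h => 'd (l n) (x n) h - 'd (v n) (x n) h) ^+ 2)
       / (2 * \sum_(1 <= m < n.+1) w m * mu m).
  move=> n nr z Xz; have [Xn Gm] := Xx n nr.
  apply: (@step R V X (F n) (G n) (l n) (v n)) => //.
  - exact: S0.
  - exact: w0.
  - move=> y; rewrite /F /G; case/andP: nr => n1 _.
    rewrite big_nat_recr //=; ring.
  - case/andP: nr => n1 nN.
    apply: scx_sum => m /andP[m1 mn].
      by apply: w0; rewrite m1 (leq_trans mn nN).
    by apply: scl; rewrite m1 (leq_trans mn nN).
  - exact: dl.
  - exact: dv.
  - by apply: dual_bound; [exact: dl | exact: dv].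
have claim : forall k, (k <= N)%N -> forall z, X z ->
    \sum_(1 <= n < k.+1) w n * l n (x n) - F k z <=
    \sum_(1 <= n < k.+1)
       (w n ^+ 2 * dual_norm (fun h => 'd (l n) (x n) h - 'd (v n) (x n) h) ^+ 2)
       / (2 * \sum_(1 <= m < n.+1) w m * mu m).
  elim => [|k IH] kN z Xz.
    by rewrite /F !big_geq // subrr.
  have kr : (1 <= k.+1 <= N)%N by rewrite kN.
  rewrite big_nat_recr //= [X in _ <= X]big_nat_recr //=.
  have := IH (ltnW kN) (x k.+1) (Xx k.+1 kr).1.
  have := step_n k.+1 kr z Xz.
  have e : F k.+1 (x k.+1) = F k (x k.+1) + w k.+1 * l k.+1 (x k.+1).
    by rewrite /F big_nat_recr.
  lra.
have part1 : wregret X w l x N <=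
    \sum_(1 <= n < N.+1)
       (w n ^+ 2 * dual_norm (fun h => 'd (l n) (x n) h - 'd (v n) (x n) h) ^+ 2)
       / (2 * \sum_(1 <= m < n.+1) w m * mu m).
  rewrite /wregret.
  set Sx := \sum_(1 <= n < N.+1) w n * l n (x n).
  set Cs := \sum_(1 <= n < N.+1) _.
  have : Sx - Cs <= inf [set \sum_(1 <= n < N.+1) w n * l n y | y in X].
    apply: lb_le_inf.
      by exists (F N (x 1%N)); exists (x 1%N) => //; case: am1.
    move=> _ [y Xy <-].
    have := claim N (leqnn N) y Xy; rewrite -/Sx -/Cs /F; lra.
  lra.
split => //.
move=> m0 p m0p p0 mue we.
apply: (le_trans part1).
rewrite mulr_sumr; apply: ler_sum_nat => n /andP[n1 nN].
have nr : (1 <= n <= N)%N by rewrite n1 -ltnS.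
have eS : \sum_(1 <= m < n.+1) w m * mu m = m0 * \sum_(1 <= m < n.+1) m%:R `^ p.
  rewrite mulr_sumr; apply: eq_big_nat => m /andP[m1 mn].
  have mr : (1 <= m <= N)%N by rewrite m1 -ltnS (leq_trans mn nN).
  by rewrite mue // we // mulrC.
rewrite eS (we n nr).
set D := dual_norm _.
set T := \sum_(1 <= m < n.+1) m%:R `^ p.
have Tlb := @sum_pow_lb R p n p0.
have n0 : (n%:R : R) != 0 by rewrite pnatr_eq0 -lt0n.
have nge : 0 < (n%:R : R) by rewrite ltr0n.
have Q0 : 0 < n%:R `^ (p + 1) by rewrite powR_gt0.
have T0 : 0 < T by rewrite -/T in Tlb; nra.
rewrite ler_pdivrMr; last by rewrite !mulr_gt0.
have -> : (p + 1) / (2 * m0) * (n%:R `^ (p - 1) * D ^+ 2) * (2 * (m0 * T)) =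
   ((p + 1) * T) * (n%:R `^ (p - 1) * D ^+ 2).
  by field; rewrite gt_eqF.
have PP : n%:R `^ p ^+ 2 = n%:R `^ (p + 1) * n%:R `^ (p - 1).
  rewrite expr2 -!powRD ?n0 ?implybT //.
  by congr (_ `^ _); ring.
rewrite PP -mulrA; apply: ler_wpM2r => //.
by rewrite mulr_ge0 ?powR_ge0 ?sqr_ge0.
Qed.
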